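(* Let $k\ge0$ be an integer. For every $\mathbf{n}=(n_1,\dots,n_d)\in\mathbb{Z}^d$ with $\sum_i n_i=0$ and $\sum_i|n_i|=2t$ for some integer $0\le t\le k$, the function $U\mapsto\sum_{\sigma\in S_d}\exp\!\big(i\sum_{j=1}^d n_{\sigma(j)}\varphi_j\big)$, where $e^{i\varphi_1},\dots,e^{i\varphi_d}$ are the eigenvalues of $U\in\mathrm{U}(d)$, belongs to $\mathcal{H}_k$.
   Context: $\mathcal{H}_k$ is the linear span of the functions $U\mapsto\mathrm{tr}(A\,U^{\otimes s}\otimes\bar U^{\otimes s})$ on $\mathrm{U}(d)$, where $0\le s\le k$ and $A$ is an operator on $(\mathbb{C}^d)^{\otimes 2s}$. $S_d$ is the symmetric group (the function is well-defined since it is symmetric in the eigenphases). *)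

(* Defs.v *)
From HB Require Import structures.
From mathcomp Require Import all_boot all_order all_algebra all_fingroup.
Set Implicit Arguments. Unset Strict Implicit. Unset Printing Implicit Defensive.
Import Order.TTheory GRing.Theory Num.Theory.
Local Open Scope ring_scope.

(* C : numClosedFieldType (e.g. the complex numbers); x^* is complex conjugation. *)

Definition unitary (C : numClosedFieldType) (d : nat) (U : 'M[C]_d) : Prop :=
  U *m (map_mx Num.conj U)^T = 1%:M.

Definition eigen_list (C : numClosedFieldType) (d : nat) (U : 'M[C]_d)
  (lam : 'I_d -> C) : Prop :=
  char_poly U = \prod_(j < d) ('X - (lam j)%:P).

(* sum_{sigma in S_d} exp(i sum_j n_{sigma j} phi_j), with lam_j = e^{i phi_j} *)
Definition sym_exp (C : numClosedFieldType) (d : nat) (n : 'I_d -> int)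
  (lam : 'I_d -> C) : C :=
  \sum_(s : 'S_d) \prod_(j < d) (lam j ^ n (s j)).

(* multi-indices for (C^d)^{tensor 2s}: first s factors (U), last s factors (conj U) *)
Definition midx (d s : nat) : finType :=
  ({ffun 'I_s -> 'I_d} * {ffun 'I_s -> 'I_d})%type.

(* tr(A U^{(x)s} (x) conj(U)^{(x)s}) written in coordinates, A an operator on
   (C^d)^{(x)2s} given by its matrix entries A a b *)
Definition trace_tens (C : numClosedFieldType) (d s : nat)
  (A : midx d s -> midx d s -> C) (U : 'M[C]_d) : C :=
  \sum_(a : midx d s) \sum_(b : midx d s)
     A a b * \prod_(l < s) (U (b.1 l) (a.1 l) * Num.conj (U (b.2 l) (a.2 l))).

Definition in_H (C : numClosedFieldType) (d k : nat) (f : 'M[C]_d -> C) : Prop :=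
  exists (m : nat) (ss : 'I_m -> 'I_k.+1)
         (As : forall i : 'I_m, midx d (ss i) -> midx d (ss i) -> C)
         (c : 'I_m -> C),
    forall U : 'M[C]_d, unitary U ->
      f U = \sum_(i < m) c i * trace_tens (As i) U.

(* Main.v *)
Require Import Defs.
From HB Require Import structures.
From mathcomp Require Import all_boot all_order all_algebra all_fingroup ring zify.
Import Order.TTheory GRing.Theory Num.Theory.
Local Open Scope ring_scope.
Set Implicit Arguments. Unset Strict Implicit. Unset Printing Implicit Defensive.

Section Poly.
Variables (C : numClosedFieldType) (d : nat).
Definition Rs (s : nat) : finType := {ffun 'I_s -> 'I_d * 'I_d}.
Definition monoU s (x : Rs s) (U : 'M[C]_d) := \prod_(l < s) U (x l).1 (x l).2.
Definition monoC s (y : Rs s) (U : 'M[C]_d) := \prod_(l < s) Num.conj (U (y l).1 (y l).2).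
Definition isP s s' (f : 'M[C]_d -> C) := exists c : Rs s -> Rs s' -> C,
  forall U, f U = \sum_(x : Rs s) \sum_(y : Rs s') c x y * (monoU x U * monoC y U).

Lemma isP_ext s s' f g : (forall U, f U = g U) -> isP s s' f -> isP s s' g.
Proof. by move=> e [c hc]; exists c => U; rewrite -e hc. Qed.

Lemma isP_cast s1 s1' s2 s2' f : s1 = s2 -> s1' = s2' -> isP s1 s1' f -> isP s2 s2' f.
Proof. by move=> -> ->. Qed.

Lemma isP0 s s' : isP s s' (fun _ => 0).
Proof.
exists (fun _ _ => 0) => U; rewrite big1 // => x _; rewrite big1 // => y _.
by rewrite mul0r.
Qed.

Lemma isP_add s s' f g : isP s s' f -> isP s s' g -> isP s s' (fun U => f U + g U).
Proof.
move=> [c1 h1] [c2 h2]; exists (fun x y => c1 x y + c2 x y) => U.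
rewrite h1 h2 -big_split; apply: eq_bigr => x _; rewrite -big_split.
by apply: eq_bigr => y _; rewrite mulrDl.
Qed.

Lemma isP_scale s s' a f : isP s s' f -> isP s s' (fun U => a * f U).
Proof.
move=> [c h]; exists (fun x y => a * c x y) => U.
rewrite h big_distrr; apply: eq_bigr => x _; rewrite big_distrr.
by apply: eq_bigr => y _; rewrite /= !mulrA.
Qed.

Lemma isP_sum (I : Type) (r : seq I) s s' (F : I -> 'M[C]_d -> C) :
  (forall i, isP s s' (F i)) -> isP s s' (fun U => \sum_(i <- r) F i U).
Proof.
move=> hF; elim: r => [|i r IH].
  by apply: isP_ext (isP0 s s') => U; rewrite big_nil.
by apply: isP_ext (isP_add (hF i) IH) => U; rewrite big_cons.
Qed.

Lemma card_Rs0 : #|Rs 0| = 1%N.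
Proof. by rewrite card_ffun card_ord expn0. Qed.

Lemma sum_Rs0 (K : C) : \sum_(y : Rs 0) K = K.
Proof. by rewrite sumr_const card_Rs0. Qed.

Lemma isP_one : isP 0 0 (fun _ => 1).
Proof.
exists (fun _ _ => 1) => U.
under eq_bigr do under eq_bigr do rewrite /monoU /monoC !big_ord0 !mulr1.
by rewrite !sum_Rs0.
Qed.

Lemma isP_const a : isP 0 0 (fun _ => a).
Proof. by apply: isP_ext (isP_scale a isP_one) => U; rewrite mulr1. Qed.

Lemma isP_U i j : isP 1 0 (fun U => U i j).
Proof.
exists (fun x _ => (x == [ffun=> (i, j)])%:R) => U.
under eq_bigr do under eq_bigr do rewrite /monoC big_ord0 mulr1.
under eq_bigr do rewrite sum_Rs0.
rewrite (bigD1 [ffun=> (i, j)]) //= eqxx mul1r big1 ?addr0.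
  by rewrite /monoU big_ord1 ffunE.
by move=> x /negbTE ->; rewrite mul0r.
Qed.

Lemma isP_C i j : isP 0 1 (fun U => Num.conj (U i j)).
Proof.
exists (fun _ y => (y == [ffun=> (i, j)])%:R) => U.
under eq_bigr do under eq_bigr do rewrite /monoU big_ord0 mul1r.
rewrite sum_Rs0.
rewrite (bigD1 [ffun=> (i, j)]) //= eqxx mul1r big1 ?addr0.
  by rewrite /monoC big_ord1 ffunE.
by move=> x /negbTE ->; rewrite mul0r.
Qed.


Definition hcat s1 s2 (p : Rs s1 * Rs s2) : Rs (s1 + s2) :=
  [ffun l => match split l with inl a => p.1 a | inr b => p.2 b end].
Definition hl s1 s2 (x : Rs (s1 + s2)) : Rs s1 := [ffun l => x (lshift s2 l)].
Definition hr s1 s2 (x : Rs (s1 + s2)) : Rs s2 := [ffun l => x (rshift s1 l)].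

Lemma split_l m n (a : 'I_m) : split (lshift n a) = inl a.
Proof. exact: (unsplitK (inl _ a)). Qed.
Lemma split_r m n (b : 'I_n) : split (rshift m b) = inr b.
Proof. exact: (unsplitK (inr _ b)). Qed.

Lemma hlK s1 s2 p : hl (@hcat s1 s2 p) = p.1.
Proof. by apply/ffunP => l; rewrite !ffunE split_l. Qed.
Lemma hrK s1 s2 p : hr (@hcat s1 s2 p) = p.2.
Proof. by apply/ffunP => l; rewrite !ffunE split_r. Qed.
Lemma hcatK s1 s2 (x : Rs (s1 + s2)) : hcat (hl x, hr x) = x.
Proof.
apply/ffunP => l; rewrite !ffunE; case: splitP => [a|b] e; rewrite ffunE;
  congr (x _); apply: val_inj => //.
Qed.

Lemma sum_cat s1 s2 (F : Rs (s1 + s2) -> C) :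
  \sum_x F x = \sum_(x1 : Rs s1) \sum_(x2 : Rs s2) F (hcat (x1, x2)).
Proof.
rewrite pair_big /= (reindex (@hcat s1 s2)) /=; last first.
  exists (fun x => (hl x, hr x)) => [[p1 p2] _|x _]; last exact: hcatK.
  by rewrite hlK hrK.
by apply: eq_bigr => -[].
Qed.

Lemma monoU_cat s1 s2 x1 x2 U :
  monoU (@hcat s1 s2 (x1, x2)) U = monoU x1 U * monoU x2 U.
Proof.
by rewrite /monoU big_split_ord /=; congr (_ * _); apply: eq_bigr => l _;
  rewrite ffunE ?split_l ?split_r.
Qed.
Lemma monoC_cat s1 s2 x1 x2 U :
  monoC (@hcat s1 s2 (x1, x2)) U = monoC x1 U * monoC x2 U.
Proof.
by rewrite /monoC big_split_ord /=; congr (_ * _); apply: eq_bigr => l _;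
  rewrite ffunE ?split_l ?split_r.
Qed.

Lemma isP_mul s1 s1' s2 s2' f g : isP s1 s1' f -> isP s2 s2' g ->
  isP (s1 + s2) (s1' + s2') (fun U => f U * g U).
Proof.
move=> [c1 h1] [c2 h2].
exists (fun x y => c1 (hl x) (hl y) * c2 (hr x) (hr y)) => U.
rewrite h1 h2 sum_cat big_distrl /=; apply: eq_bigr => x1 _.
under [RHS]eq_bigr do rewrite (@sum_cat s1' s2').
rewrite [RHS]exchange_big big_distrl /=; apply: eq_bigr => y1 _.
rewrite big_distrr /=; apply: eq_bigr => x2 _.
rewrite big_distrr /=; apply: eq_bigr => y2 _.
rewrite !hlK !hrK /= monoU_cat monoC_cat; ring.
Qed.

Lemma isP_prod (I : Type) (r : seq I) (p q : I -> nat) (F : I -> 'M[C]_d -> C) :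
  (forall i, isP (p i) (q i) (F i)) ->
  isP (\sum_(i <- r) p i)%N (\sum_(i <- r) q i)%N (fun U => \prod_(i <- r) F i U).
Proof.
move=> hF; elim: r => [|i r IH].
  by rewrite !big_nil; apply: isP_ext isP_one => U; rewrite big_nil.
rewrite !big_cons; apply: isP_ext (isP_mul (hF i) IH) => U.
by rewrite big_cons.
Qed.

End Poly.

Section MD.
Variables (C : numClosedFieldType) (d : nat).

Definition MD (B : 'I_d -> 'M[C]_d) : C :=
  \sum_(s : 'S_d) \sum_(t : 'S_d) (-1) ^+ s * (-1) ^+ t * \prod_(i < d) B i (s i) (t i).

Lemma MD_ext B B' : (forall i, B i = B' i) -> MD B = MD B'.
Proof.
move=> e; apply: eq_bigr => s _; apply: eq_bigr => t _.
by congr (_ * _); apply: eq_bigr => i _; rewrite e.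
Qed.

Lemma MD_det B : MD B = \sum_(t : 'S_d) (-1) ^+ t * \det (\matrix_(a, i) B i a (t i)).
Proof.
rewrite /MD exchange_big; apply: eq_bigr => t _.
rewrite /determinant big_distrr /= (reindex_inj invg_inj) /=.
apply: eq_bigr => s _; rewrite odd_permV [RHS]mulrCA [RHS]mulrA; congr (_ * _).
rewrite [LHS](reindex_inj (@perm_inj _ s)) /=; apply: eq_bigr => a _.
by rewrite mxE permK.
Qed.

Lemma MD_tr B : MD (fun i => (B i)^T) = MD B.
Proof.
rewrite /MD exchange_big; apply: eq_bigr => s _; apply: eq_bigr => t _.
rewrite [(-1) ^+ t * _]mulrC; congr (_ * _); apply: eq_bigr => i _; by rewrite mxE.
Qed.

Lemma MD_lmul B V : MD (fun i => V *m B i) = \det V * MD B.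
Proof.
rewrite !MD_det big_distrr; apply: eq_bigr => t _; rewrite [RHS]mulrCA; congr (_ * _).
rewrite -det_mulmx; congr (\det _); apply/matrixP => a i; rewrite !mxE.
by apply: eq_bigr => k _; rewrite mxE.
Qed.

Lemma MD_rmul B W : MD (fun i => B i *m W) = MD B * \det W.
Proof.
rewrite -MD_tr (@MD_ext _ (fun i => W^T *m (B i)^T)); last by move=> i; rewrite trmx_mul.
by rewrite MD_lmul MD_tr det_tr mulrC.
Qed.

Lemma MD_diag (r : 'I_d -> 'rV[C]_d) :
  MD (fun i => diag_mx (r i)) = \sum_(s : 'S_d) \prod_(i < d) r i 0 (s i).
Proof.
apply: eq_bigr => s _; rewrite (bigD1 s) //= [X in _ + X]big1 ?addr0.
  rewrite -signr_addb addbb expr0 mul1r; apply: eq_bigr => i _.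
  by rewrite mxE eqxx mulr1n.
move=> t ts.
have [i hi] : exists i, s i != t i.
  apply/existsP; apply: contraR ts; rewrite negb_exists => /forallP h.
  by apply/eqP/permP => i; apply/esym/eqP; rewrite -[_ == _]negbK h.
by rewrite (bigD1 i) //= mxE (negbTE hi) mulr0n mul0r mulr0.
Qed.

Definition Us (U : 'M[C]_d) : 'M[C]_d := (map_mx Num.conj U)^T.

Lemma isP_pow p i j : isP p 0 (fun U : 'M[C]_d => (U ^+ p) i j).
Proof.
elim: p i j => [|p IH] i j.
  by apply: isP_ext (isP_const d ((i == j)%:R : C)) => U; rewrite expr0 mxE.
apply: isP_cast (addn1 p) (addn0 0) _.
apply: isP_ext (isP_sum (index_enum 'I_d) (fun k => isP_mul (IH i k) (isP_U C k j))) => U.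
by rewrite exprSr -mulmxE mxE.
Qed.

Lemma isP_powC q i j : isP 0 q (fun U : 'M[C]_d => (Us U ^+ q) i j).
Proof.
elim: q i j => [|q IH] i j.
  by apply: isP_ext (isP_const d ((i == j)%:R : C)) => U; rewrite expr0 mxE.
apply: isP_cast (addn0 0) (addn1 q) _.
apply: isP_ext (isP_sum (index_enum 'I_d) (fun k => isP_mul (IH i k) (isP_C C j k))) => U.
by rewrite exprSr -mulmxE mxE; apply: eq_bigr => k _; rewrite !mxE.
Qed.

End MD.

Section P3.
Variables (C : numClosedFieldType) (d : nat).

Definition pp (n : 'I_d -> int) i : nat := if (0 <= n i) then absz (n i) else 0%N.
Definition qq (n : 'I_d -> int) i : nat := if (0 <= n i) then 0%N else absz (n i).
Definition Af n (U : 'M[C]_d) i := U ^+ pp n i *m Us U ^+ qq n i.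
Definition fF n (U : 'M[C]_d) := MD (Af n U).

Lemma isP_fF n : isP (\sum_(i < d) pp n i)%N (\sum_(i < d) qq n i)%N (fF n).
Proof.
apply: isP_sum => s; apply: isP_sum => t; apply: isP_scale.
apply: isP_prod => i.
apply: isP_cast (addn0 _) (add0n _) _.
apply: isP_ext (isP_sum (index_enum 'I_d)
   (fun k => isP_mul (isP_pow C (pp n i) (s i) k) (isP_powC C (qq n i) k (t i)))) => U.
by rewrite /Af mxE.
Qed.

Definition gpair s (q : Rs d s * Rs d s) : midx d s * midx d s :=
  (([ffun l => (q.1 l).2], [ffun l => (q.2 l).2]),
   ([ffun l => (q.1 l).1], [ffun l => (q.2 l).1])).
Definition hpair s (p : midx d s * midx d s) : Rs d s * Rs d s :=
  ([ffun l => (p.2.1 l, p.1.1 l)], [ffun l => (p.2.2 l, p.1.2 l)]).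

Lemma hgK s : cancel (@gpair s) (@hpair s).
Proof.
by move=> [x y]; rewrite /gpair /hpair /=; congr (_, _); apply/ffunP => l;
  rewrite !ffunE -surjective_pairing.
Qed.
Lemma ghK s : cancel (@hpair s) (@gpair s).
Proof.
by move=> [[a1 a2] [b1 b2]]; rewrite /gpair /hpair /=;
  congr ((_, _), (_, _)); apply/ffunP => l; rewrite !ffunE.
Qed.

Lemma isP_inH k s (f : 'M[C]_d -> C) : (s <= k)%N -> isP s s f -> in_H k f.
Proof.
move=> sk [c hc].
have sk' : (s < k.+1)%N by [].
exists 1%N, (fun _ => Ordinal sk'),
  (fun _ (a b : midx d s) => c (hpair (a, b)).1 (hpair (a, b)).2), (fun _ => 1).
move=> U _; rewrite big_ord1 mul1r hc /trace_tens /=.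
rewrite pair_big [RHS]pair_big /= (reindex (@gpair s)) /=; last first.
  by exists (@hpair s) => p _; [apply: hgK | apply: ghK].
apply: eq_bigr => -[x y] _ /=.
have -> : [ffun l => ([ffun l0 => (x l0).1] l, [ffun l0 => (x l0).2] l)] = x.
  by apply/ffunP => l; rewrite !ffunE -surjective_pairing.
have -> : [ffun l => ([ffun l0 => (y l0).1] l, [ffun l0 => (y l0).2] l)] = y.
  by apply/ffunP => l; rewrite !ffunE -surjective_pairing.
congr (_ * _); rewrite big_split /=; congr (_ * _); apply: eq_bigr => l _; by rewrite !ffunE.
Qed.

End P3.

Section P4.
Variables (C : numClosedFieldType) (d : nat).
Implicit Types (Q P M Dm : 'M[C]_d).

Lemma sim_pow Q P M Dm p : Q *m P = 1%:M -> P *m Q = 1%:M -> M = Q *m Dm *m P ->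
  M ^+ p = Q *m Dm ^+ p *m P.
Proof.
move=> QP PQ ->; elim: p => [|p IH].
  by rewrite !expr0 mulmx1 QP.
rewrite !exprSr -!mulmxE IH !mulmxA; congr (_ *m _).
by rewrite -!mulmxA (mulmxA P Q) PQ mul1mx.
Qed.

Lemma diag_pow (r : 'rV[C]_d) p : (diag_mx r) ^+ p = diag_mx (\row_j (r 0 j ^+ p)).
Proof.
elim: p => [|p IH].
  by rewrite expr0; apply/matrixP => i j; rewrite !mxE expr0.
by rewrite exprSr -mulmxE IH mulmx_diag; congr diag_mx; apply/rowP => j;
  rewrite !mxE exprSr.
Qed.

Lemma char_poly_sim Q P M : Q *m P = 1%:M -> P *m Q = 1%:M ->
  char_poly (Q *m M *m P) = char_poly M.
Proof.
move=> QP PQ.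
pose f := @map_mx _ _ (@polyC C) d d.
have hc : char_poly_mx (Q *m M *m P) = f Q *m char_poly_mx M *m f P.
  rewrite /char_poly_mx mulmxBr mulmxBl /f !map_mxM; congr (_ - _).
  by rewrite mul_mx_scalar -scalemxAl -map_mxM QP map_mx1 scalemx1.
rewrite /char_poly hc !det_mulmx mulrAC -det_mulmx -map_mxM QP map_mx1 det1.
by rewrite mul1r.
Qed.

End P4.

Section P5.
Variables (C : numClosedFieldType) (d : nat).

Lemma sym_exp_perm (n : 'I_d -> int) (f : 'I_d -> C) (pi : 'S_d) :
  sym_exp n (fun j => f (pi j)) = sym_exp n f.
Proof.
rewrite /sym_exp [RHS](reindex_inj (mulgI pi^-1)%g) /=.
apply: eq_bigr => s _.
rewrite [LHS](reindex_inj (@perm_inj _ pi^-1)) /=.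
by apply: eq_bigr => j _; rewrite permKV permM.
Qed.

Lemma perm_of_poly (lam mu : 'I_d -> C) :
  \prod_(j < d) ('X - (lam j)%:P) = \prod_(j < d) ('X - (mu j)%:P) ->
  exists pi : 'S_d, forall j, lam j = mu (pi j).
Proof.
move=> e.
have : perm_eq [tuple lam j | j < d] [tuple mu j | j < d].
  apply: prod_XsubC_eq; rewrite !big_tuple.
  by under eq_bigr do rewrite tnth_mktuple; under [RHS]eq_bigr do rewrite tnth_mktuple.
move/tuple_permP => [pi hpi]; exists pi => j.
have ht : [tuple lam j | j < d] = [tuple tnth [tuple mu j | j < d] (pi i) | i < d].
  by apply: val_inj.
by have := congr1 (fun t => tnth t j) ht; rewrite /= !tnth_mktuple.
Qed.

Lemma sum_reindex (n : 'I_d -> int) (f : 'I_d -> C) :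
  \sum_(s : 'S_d) \prod_(i < d) f (s i) ^ n i = sym_exp n f.
Proof.
rewrite /sym_exp (reindex_inj invg_inj) /=; apply: eq_bigr => s _.
rewrite [LHS](reindex_inj (@perm_inj _ s)) /=.
by apply: eq_bigr => j _; rewrite permK.
Qed.


Lemma key (n : 'I_d -> int) (U : 'M[C]_d) (lam : 'I_d -> C) :
  unitary U -> eigen_list U lam -> fF n U = sym_exp n lam.
Proof.
move=> hU hE.
have hU' : U *m map_mx Num.conj U^T = 1%:M by rewrite -map_trmx.
have hN : U \is normalmx.
  by apply/normalmxP; rewrite hU' (mulmx1C hU').
have hUe := elimT (@orthomx_spectralP C d U) hN.
move: hUe (spectral_unitarymx U).
set P := spectralmx U; set D := spectral_diag U => hUe hPu.
have Pu := unitarymx_unit hPu.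
set Q := invmx P.
have QP : Q *m P = 1%:M by exact: mulVmx.
have PQ : P *m Q = 1%:M by exact: mulmxV.
have hQ : Q = map_mx Num.conj P^T by exact: invmx_unitary.
set Dc := map_mx Num.conj D.
have hUs : Us U = Q *m diag_mx Dc *m P.
  rewrite /Us {1}hUe !map_mxM !trmx_mul mulmxA map_diag_mx tr_diag_mx; congr (_ *m _ *m _).
    by rewrite hQ map_trmx.
  by rewrite -/Q hQ; apply/matrixP => i j; rewrite !mxE; exact: conjCK.
have hDD : diag_mx D *m diag_mx Dc = 1%:M.
  have : Q *m (diag_mx D *m diag_mx Dc) *m P = 1%:M.
    rewrite -hU -/(Us U) hUs {1}hUe !mulmxA; congr (_ *m _).
    by rewrite -!mulmxA (mulmxA P Q) PQ mul1mx.
  move=> /(congr1 (fun M => P *m M *m Q)).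
  by rewrite !mulmxA PQ mul1mx -mulmxA PQ mulmx1 mulmx1 PQ.
have hinv j : Num.conj (D 0 j) = (D 0 j)^-1.
  have := congr1 (fun M : 'M[C]_d => M j j) hDD; rewrite mulmx_diag !mxE eqxx !mulr1n => h.
  have Dn0 : D 0 j != 0 by apply/eqP => e; move: h; rewrite e mul0r => /eqP; rewrite eq_sym oner_eq0.
  by rewrite -[LHS](mulKf Dn0) h mulr1.
have hA i : Af n U i = Q *m diag_mx (\row_j (D 0 j ^ n i)) *m P.
  rewrite /Af (sim_pow _ QP PQ hUe) (sim_pow _ QP PQ hUs) !diag_pow.
  rewrite -!mulmxA (mulmxA P Q) PQ mul1mx !mulmxA; congr (_ *m _); rewrite -mulmxA mulmx_diag; congr (_ *m diag_mx _).
  apply/rowP => j; rewrite !mxE hinv /pp /qq; case: (n i) => k /=.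
    by rewrite expr0 mulr1.
  by rewrite expr0 mul1r exprVn.
have -> : fF n U = MD (fun i => diag_mx (\row_j (D 0 j ^ n i))).
  rewrite /fF (MD_ext (B' := fun i => Q *m (diag_mx (\row_j (D 0 j ^ n i)) *m P))); last first.
    by move=> i; rewrite hA mulmxA.
  rewrite MD_lmul MD_rmul mulrCA -det_mulmx QP det1 mulr1 //.
rewrite MD_diag.
under eq_bigr do under eq_bigr do rewrite mxE.
rewrite (sum_reindex n (fun j => D 0 j)).
have [pi hpi] : exists pi : 'S_d, forall j, lam j = D 0 (pi j).
  apply: perm_of_poly; rewrite -hE /eigen_list hUe char_poly_sim //.
  rewrite char_poly_trig ?diag_mx_is_trig //; apply: eq_bigr => j _.
  by rewrite mxE eqxx mulr1n.
rewrite -(sym_exp_perm n (fun j => D 0 j) pi); apply: eq_bigr => s _.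
by apply: eq_bigr => j _; rewrite hpi.
Qed.

End P5.

Lemma Posz_sum d (f : 'I_d -> nat) : (\sum_(i < d) f i)%N%:Z = \sum_(i < d) (f i)%:Z.
Proof. exact: (big_morph Posz PoszD (erefl _)). Qed.

Lemma deg d (n : 'I_d -> int) t : \sum_(i < d) n i = 0 ->
  \sum_(i < d) `|n i| = (2 * t)%:Z ->
  (\sum_(i < d) pp n i)%N = t /\ (\sum_(i < d) qq n i)%N = t.
Proof.
move=> hs ha.
have e1 i : n i = (pp n i)%:Z - (qq n i)%:Z.
  by rewrite /pp /qq; case: (n i) => k /=; rewrite ?subr0 ?NegzE ?sub0r.
have e2 i : `|n i| = (pp n i + qq n i)%N%:Z.
  by rewrite /pp /qq; case: (n i) => k /=; rewrite ?addn0 ?NegzE ?normrN.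
have h1 : (\sum_(i < d) pp n i)%N%:Z - (\sum_(i < d) qq n i)%N%:Z = 0.
  rewrite !Posz_sum -sumrB -[RHS]hs; apply: eq_bigr => i _; by rewrite e1.
have h2 : ((\sum_(i < d) pp n i) + (\sum_(i < d) qq n i))%N%:Z = (2 * t)%:Z.
  rewrite -ha PoszD !Posz_sum -big_split; apply: eq_bigr => i _; by rewrite e2 PoszD.
move/eqP: h1; rewrite subr_eq0 => /eqP [] h1.
case: h2; rewrite h1 addnn mul2n => /double_inj h2; by rewrite h2.
Qed.

Unset Implicit Arguments.

Theorem lemma14 (C : numClosedFieldType) (d k t : nat) (n : 'I_d -> int)
  (hsum : \sum_(i < d) n i = 0)
  (habs : \sum_(i < d) `|n i| = (2 * t)%:Z)
  (ht : (t <= k)%N) :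
  exists f : 'M[C]_d -> C,
    in_H k f /\
    forall (U : 'M[C]_d) (lam : 'I_d -> C),
      unitary U -> eigen_list U lam -> f U = sym_exp n lam.
Proof.
have [h1 h2] := deg hsum habs.
exists (@fF C d n); split.
  apply: (isP_inH ht); apply: isP_cast h1 h2 _; exact: isP_fF.
by move=> U lam hU hE; exact: key.
Qed.
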